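(* Let $d>0$ and $\xi>0$. Then the functions \[ f_\pm(y)=\exp\!\Big(-d\,\operatorname{Re}\big(e^{-\mathrm{i}\pi/4}\sqrt{-\xi\pm\mathrm{i}y}\big)\Big) \] are decreasing functions of $y\ge0$, where $\sqrt{\cdot}$ denotes the principal branch of the square root (positive real part, cut along $(-\infty,0]$). *)

(* Defs.v *)
From HB Require Import structures.
From mathcomp Require Import all_boot all_order all_algebra.
From mathcomp Require Import all_classical all_reals.
From mathcomp Require Import sequences exp trigo.
From mathcomp.real_closed Require Import complex.
Set Implicit Arguments. Unset Strict Implicit. Unset Printing Implicit Defensive.
Import Order.TTheory GRing.Theory Num.Theory.
Local Open Scope ring_scope.
Local Open Scope complex_scope.

Section Defs.
Variable R : realType.

Definition rot_m_pi4 : R[i] := (cos (pi / 4%:R)) -i* (sin (pi / 4%:R)).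

Definition f_plus (d xi y : R) : R :=
  expR (- d * complex.Re (rot_m_pi4 * sqrtc ((- xi) +i* y))).

Definition f_minus (d xi y : R) : R :=
  expR (- d * complex.Re (rot_m_pi4 * sqrtc ((- xi) -i* y))).
End Defs.

(* Main.v *)
Require Import Defs.
From HB Require Import structures.
From mathcomp Require Import all_boot all_order all_algebra.
From mathcomp Require Import all_classical all_reals.
From mathcomp Require Import sequences exp trigo.
From mathcomp.real_closed Require Import complex.
From mathcomp Require Import lra.
Import Order.TTheory GRing.Theory Num.Theory.
Local Open Scope ring_scope.

Section S.
Variable R : realType.
Lemma cs : let c := cos (pi / 4%:R) : R in let s := sin (pi / 4%:R) : R in 0 < c /\ s = c.
Proof.
move=> c s.
have hc : 0 < c.
  rewrite /c cos_gt0_pihalf//.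
  rewrite ltr_pM2l ?pi_gt0// ltf_pV2 ?qualifE//= ltr_nat andbT.
  by rewrite (@lt_trans _ _ 0)// ?oppr_lt0 ?divr_gt0 ?pi_gt0.
split=> //.
have := @tan_piquarter R; rewrite /tan -/c -/s => h.
by rewrite -[s](divfK (lt0r_neq0 hc)) -/s h mul1r.
Qed.

Lemma reE (a b : R) : complex.Re (rot_m_pi4 R * Complex a b) =
   cos (pi / 4%:R) * a + sin (pi/4%:R) * b.
Proof. rewrite /rot_m_pi4 /=. lra. Qed.

Lemma key (xi y1 y2 : R) : 0 < xi -> 0 <= y1 -> y1 < y2 ->
  let r y := Num.sqrt ((- xi) ^+ 2 + y ^+ 2) in
  [/\ xi <= r y1, r y1 < r y2,
      Num.sqrt ((r y1 + - xi) / 2%:R) <= Num.sqrt ((r y2 + - xi) / 2%:R) &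
      Num.sqrt ((r y1 - - xi) / 2%:R) < Num.sqrt ((r y2 - - xi) / 2%:R)].
Proof.
move=> hxi h1 h12 r.
have hr1 : xi <= r y1.
  rewrite -[X in X <= _](ger0_norm (ltW hxi)) -sqrtr_sqr /r ler_sqrt; last first.
    by rewrite addr_ge0 // sqr_ge0.
  by rewrite sqrrN lerDl sqr_ge0.
have hr : r y1 < r y2.
  rewrite /r ltr_sqrt; last by rewrite sqrrN; nra.
  rewrite sqrrN; nra.
split=> //.
  rewrite ler_sqrt; last by rewrite divr_ge0 //; lra.
  by rewrite ler_pM2r //; lra.
rewrite ltr_sqrt; last by rewrite divr_gt0 //; lra.
by rewrite ltr_pM2r //; lra.
Qed.
End S.

Theorem lemma3p2 (R : realType) (d xi : R) (hd : 0 < d) (hxi : 0 < xi) :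
  (forall y1 y2 : R, 0 <= y1 -> y1 < y2 -> f_plus d xi y2 < f_plus d xi y1) /\
  (forall y1 y2 : R, 0 < y1 -> y1 < y2 -> f_minus d xi y2 < f_minus d xi y1).
Proof.
have [hc hs] := @cs R.
set c := cos _ in hc hs; set s := sin _ in hs.
have hdc : 0 < d * c by rewrite mulr_gt0.
split=> y1 y2 h1 h12.
  rewrite /f_plus ltr_expR /sqrtc !reE -/c -/s hs.
  have [k1 k2 k3 k4] := @key R _ _ _ hxi h1 h12.
  idtac.
  have sg1 : forall y : R, 0 <= y -> (if y == 0 then 1 else Num.sg y) = 1.
    move=> y hy; case: eqP => // /eqP hy0; apply: gtr0_sg; by rewrite lt0r hy0.
  rewrite (sg1 y2) ?(le_trans h1) ?ltW // (sg1 y1) // !mul1r.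
  rewrite /= in k3 k4.
  nra.
rewrite /f_minus ltr_expR /sqrtc !reE -/c -/s hs.
have [k1 k2 k3 k4] := @key R _ _ _ hxi (ltW h1) h12.
have sgm : forall y : R, 0 < y -> (if - y == 0 then 1 else Num.sg (- y)) = -1.
  move=> y hy; rewrite oppr_eq0 gt_eqF // sgrN gtr0_sg //.
rewrite (sgm y2) ?(lt_trans h1) // (sgm y1) //.
rewrite (sqrrN y1) (sqrrN y2).
rewrite /= in k1 k2 k3 k4.
set r1 := Num.sqrt ((- xi) ^+ 2 + y1 ^+ 2) in k1 k2 k3 k4 *.
set r2 := Num.sqrt ((- xi) ^+ 2 + y2 ^+ 2) in k2 k3 k4 *.
set A1 := Num.sqrt ((r1 + - xi) / 2%:R) in k3 *.
set A2 := Num.sqrt ((r2 + - xi) / 2%:R) in k3 *.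
set B1 := Num.sqrt ((r1 - - xi) / 2%:R) in k4 *.
set B2 := Num.sqrt ((r2 - - xi) / 2%:R) in k4 *.
have eA1 : A1 ^+ 2 = (r1 + - xi) / 2%:R by rewrite sqr_sqrtr // divr_ge0 //; lra.
have eA2 : A2 ^+ 2 = (r2 + - xi) / 2%:R by rewrite sqr_sqrtr // divr_ge0 //; lra.
have eB1 : B1 ^+ 2 = (r1 - - xi) / 2%:R by rewrite sqr_sqrtr // divr_ge0 //; lra.
have eB2 : B2 ^+ 2 = (r2 - - xi) / 2%:R by rewrite sqr_sqrtr // divr_ge0 //; lra.
have a1 : 0 <= A1 by apply: sqrtr_ge0.
have b1 : 0 <= B1 by apply: sqrtr_ge0.
have e1 : (A1 - B1) * (A1 + B1) = - xi by rewrite -subr_sqr eA1 eB1; lra.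
have e2 : (A2 - B2) * (A2 + B2) = - xi by rewrite -subr_sqr eA2 eB2; lra.
have S1 : 0 < A1 + B1 by nra.
have D1 : A1 - B1 < 0 by nra.
have key' : A1 - B1 < A2 - B2 by nra.
nra.
Qed.
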